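(* For every $h\in(\tfrac12,\tfrac34)$ and every integer $k\ge1$, $$\rho_h(k)\ge\frac{h(2h-1)}{2k^{2-2h}}.$$ In particular $\sum_{k=1}^\infty\rho_h^2(k)\ge\frac{h^2(2h-1)^2}{4}\zeta(4-4h)$, where $\zeta$ is the Riemann zeta function, and consequently $\lim_{h\to\frac34-}\sum_{k=1}^\infty\rho_h^2(k)=\infty$.
   Context: $\rho_h(k)=\frac12\big((k+1)^{2h}+(k-1)^{2h}-2k^{2h}\big)$. *)

(* Defs.v *)
From Stdlib Require Import Reals Lra.
From Coquelicot Require Import Coquelicot.
Open Scope R_scope.

(* Real power x^y for x >= 0, with the convention 0^y = 0 (y > 0).
   Stdlib's Rpower 0 y = exp (y * ln 0) = 1, hence the explicit case. *)
Definition rpow (x y : R) : R := if Rle_dec x 0 then 0 else Rpower x y.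

Definition rho (h : R) (k : nat) : R :=
  (rpow (INR k + 1) (2 * h) + rpow (INR k - 1) (2 * h) - 2 * rpow (INR k) (2 * h)) / 2.

Definition zeta (s : R) : R := Series (fun n : nat => / rpow (INR n + 1) s).

(* Main.v *)
Require Import Defs.
From Stdlib Require Import Reals Lra Lia ZArith.
From Coquelicot Require Import Coquelicot.
Open Scope R_scope.

Lemma exp_le' x y : x <= y -> exp x <= exp y.
Proof. intros [H|H]; [left; apply exp_increasing; auto | subst; lra]. Qed.

Lemma Rpower_le_neg x y e : 0 < x <= y -> e <= 0 -> Rpower y e <= Rpower x e.
Proof. intros [Hx Hy] He. unfold Rpower. apply exp_le'.
  assert (ln x <= ln y) by (apply ln_le; lra). nra. Qed.

Lemma is_derive_pw x p : 0 < x -> is_derive (fun x => Rpower x p) x (p * Rpower x (p-1)).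
Proof. intros. apply is_derive_Reals. apply derivable_pt_lim_power; auto. Qed.

Lemma is_derive_eq (f : R -> R) (x l l' : R) : is_derive f x l -> l = l' -> is_derive f x l'.
Proof. intros H ->; auto. Qed.

Lemma pow_mvt p a b : 0 < a < b -> exists c, a < c < b /\
  Rpower b p - Rpower a p = p * Rpower c (p-1) * (b - a).
Proof. intros Hab.
  destruct (MVT_cor2 (fun x => Rpower x p) (fun x => p * Rpower x (p-1)) a b) as [c [H1 H2]].
  lra. intros c Hc. apply derivable_pt_lim_power. lra.
  exists c; split; auto. Qed.

Lemma d_plus k p t : 0 < k + t -> is_derive (fun t => Rpower (k+t) p) t (p * Rpower (k+t) (p-1)).
Proof. intros H.
  apply is_derive_eq with (scal 1 (p * Rpower (k+t) (p-1))).
  apply (is_derive_comp (fun x => Rpower x p) (fun t => k+t)).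
  apply is_derive_pw; auto. auto_derive; auto; ring.
  unfold scal; simpl; unfold mult; simpl; ring. Qed.

Lemma d_minus k p t : 0 < k - t -> is_derive (fun t => Rpower (k-t) p) t (- (p * Rpower (k-t) (p-1))).
Proof. intros H.
  apply is_derive_eq with (scal (-1) (p * Rpower (k-t) (p-1))).
  apply (is_derive_comp (fun x => Rpower x p) (fun t => k-t)).
  apply is_derive_pw; auto. auto_derive; auto; ring.
  unfold scal; simpl; unfold mult; simpl; ring. Qed.

Lemma phi_deriv k p c t : 0 < k - t -> 0 < k + t ->
  derivable_pt_lim (fun t => Rpower (k+t) p + Rpower (k-t) p - 2 * Rpower k p - c*t*t) t
    (p * Rpower (k+t) (p-1) - p * Rpower (k-t) (p-1) - 2*c*t).
Proof. intros H1 H2. apply is_derive_Reals.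
  apply is_derive_eq with
    (plus (plus (p * Rpower (k+t) (p-1)) (- (p * Rpower (k-t) (p-1)))) (-(2*c*t))).
  apply is_derive_ext with (fun t => plus (Rpower (k+t) p + Rpower (k-t) p) (- 2 * Rpower k p - c*t*t)).
  intros; unfold plus; simpl; ring.
  apply (is_derive_plus (fun t => Rpower (k+t) p + Rpower (k-t) p) (fun t => - 2 * Rpower k p - c*t*t)).
  apply is_derive_ext with (fun t => plus (Rpower (k+t) p) (Rpower (k-t) p)). reflexivity.
  apply (is_derive_plus (fun t => Rpower (k+t) p) (fun t => Rpower (k-t) p)).
  apply d_plus; auto. apply d_minus; auto.
  auto_derive; auto; ring.
  unfold plus; simpl; ring.
Qed.

Lemma sd_core p k c : 1 < p < 2 -> 1 < k ->
  (forall tau xi, 0 < tau < 1 -> k - tau < xi < k + tau ->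
     0 <= p * ((p - 1) * Rpower xi (p-2) * (k + tau - (k - tau))) - 2 * c * tau) ->
  c <= Rpower (k+1) p + Rpower (k-1) p - 2 * Rpower k p.
Proof. intros Hp Hk Hc.
  destruct (MVT_cor2 (fun t => Rpower (k+t) p + Rpower (k-t) p - 2 * Rpower k p - c*t*t)
     (fun t => p * Rpower (k+t) (p-1) - p * Rpower (k-t) (p-1) - 2*c*t) 0 1) as [tau [E Ht]].
  lra. intros t Ht. apply phi_deriv; lra.
  destruct (pow_mvt (p-1) (k-tau) (k+tau)) as [xi [Hxi Exi]]. lra.
  replace (p-1-1) with (p-2) in Exi by ring.
  assert (H := Hc tau xi Ht Hxi).
  rewrite !Rplus_0_r, Rminus_0_r in E.
  assert (E2 : p * Rpower (k + tau) (p - 1) - p * Rpower (k - tau) (p - 1) - 2 * c * tau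
     = p * ((p - 1) * Rpower xi (p - 2) * (k + tau - (k - tau))) - 2 * c * tau).
  { rewrite <- Exi. ring. }
  rewrite E2 in E. nra. Qed.

Lemma sd_lower p k : 1 < p < 2 -> 1 < k ->
  p*(p-1)*Rpower (k+1) (p-2) <= Rpower (k+1) p + Rpower (k-1) p - 2 * Rpower k p.
Proof. intros Hp Hk. apply sd_core; auto. intros tau xi Ht Hxi.
  assert (Rpower (k+1) (p-2) <= Rpower xi (p-2)) by (apply Rpower_le_neg; lra).
  assert (0 < p*(p-1)) by nra.
  replace (p * ((p - 1) * Rpower xi (p - 2) * (k + tau - (k - tau))) -
   2 * (p * (p - 1) * Rpower (k + 1) (p - 2)) * tau) with
   (2*tau*(p*(p-1))*(Rpower xi (p-2) - Rpower (k + 1) (p - 2))) by ring.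
  apply Rmult_le_pos; [nra | lra]. Qed.

Lemma sd_upper p k : 1 < p < 2 -> 1 < k ->
  Rpower (k+1) p + Rpower (k-1) p - 2 * Rpower k p <= p*(p-1)*Rpower (k-1) (p-2).
Proof. intros Hp Hk.
  destruct (MVT_cor2 (fun t => Rpower (k+t) p + Rpower (k-t) p - 2 * Rpower k p - (p*(p-1)*Rpower (k-1) (p-2))*t*t)
     (fun t => p * Rpower (k+t) (p-1) - p * Rpower (k-t) (p-1) - 2*(p*(p-1)*Rpower (k-1) (p-2))*t) 0 1) as [tau [E Ht]].
  lra. intros t Ht. apply phi_deriv; lra.
  destruct (pow_mvt (p-1) (k-tau) (k+tau)) as [xi [Hxi Exi]]. lra.
  replace (p-1-1) with (p-2) in Exi by ring.
  assert (Rpower xi (p-2) <= Rpower (k-1) (p-2)) by (apply Rpower_le_neg; lra).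
  assert (0 < p*(p-1)) by nra.
  rewrite !Rplus_0_r, Rminus_0_r in E.
  assert (E2 : p * Rpower (k + tau) (p - 1) - p * Rpower (k - tau) (p - 1) - 2 * (p*(p-1)*Rpower (k-1) (p-2)) * tau
     = 2*tau*(p*(p-1))*(Rpower xi (p-2) - Rpower (k - 1) (p - 2))).
  { replace (p * Rpower (k + tau) (p - 1) - p * Rpower (k - tau) (p - 1)) with
      (p * (Rpower (k + tau) (p - 1) - Rpower (k - tau) (p - 1))) by ring.
    rewrite Exi. ring. }
  rewrite E2 in E.
  assert (2*tau*(p*(p-1))*(Rpower xi (p-2) - Rpower (k - 1) (p - 2)) <= 0).
  { rewrite <- (Rmult_0_r (2*tau*(p*(p-1)))). apply Rmult_le_compat_l; nra. }
  nra. Qed.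

Lemma rpow_pos x y : 0 < x -> rpow x y = Rpower x y.
Proof. intros H; unfold rpow; destruct (Rle_dec x 0); [lra|auto]. Qed.

Lemma Rpower_1_base y : Rpower 1 y = 1.
Proof. unfold Rpower; rewrite ln_1, Rmult_0_r; apply exp_0. Qed.

Lemma Rpower_gt0 x y : 0 < Rpower x y.
Proof. unfold Rpower; apply exp_pos. Qed.

Lemma part1 h k : 1/2 < h < 3/4 -> (1 <= k)%nat ->
  rho h k >= h * (2 * h - 1) / (2 * rpow (INR k) (2 - 2 * h)).
Proof. intros Hh Hk. unfold rho.
  destruct (Nat.eq_dec k 1) as [->|Hk2].
  - simpl INR. replace (1-1) with 0 by ring.
    assert (E0 : rpow 0 (2*h) = 0) by (unfold rpow; destruct (Rle_dec 0 0); lra).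
    rewrite E0, !(rpow_pos 1) by lra. rewrite !Rpower_1_base.
    rewrite (rpow_pos (1+1)) by lra.
    replace (2*h) with (1 + (2*h-1)) by ring. rewrite Rpower_plus, Rpower_1 by lra.
    assert (Rpower (1+1) (2*h-1) >= 1 + (2*h-1)/2).
    { unfold Rpower. assert (H2 := ln_lt_2). replace (1+1) with 2 by ring.
      assert (H3 := exp_ineq1_le ((2*h-1) * ln 2)). nra. }
    unfold Rdiv. rewrite Rmult_1_r. nra.
  - assert (HK : 2 <= INR k). { replace 2 with (INR 2) by (simpl; ring). apply le_INR. lia. }
    rewrite !rpow_pos by lra.
    assert (H := sd_lower (2*h) (INR k) ltac:(lra) ltac:(lra)).
    replace (2*h-2) with (-(2-2*h)) in H by ring.
    assert (Rpower (INR k + 1) (-(2-2*h)) >= / 2 * / Rpower (INR k) (2-2*h)).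
    { apply Rle_ge. apply Rle_trans with (Rpower (2 * INR k) (-(2-2*h))).
      2: apply Rpower_le_neg; lra.
      rewrite <- Rpower_mult_distr by lra. rewrite (Rpower_Ropp (INR k)).
      apply Rmult_le_compat_r. left; apply Rinv_0_lt_compat, Rpower_gt0.
      rewrite <- (Rpower_1 2) at 1 by lra. rewrite <- Rpower_Ropp. apply Rle_Rpower; lra. }
    assert (0 < h * (2*h-1)) by nra.
    assert (0 < Rpower (INR k) (2-2*h)) by apply Rpower_gt0.
    unfold Rdiv. rewrite Rinv_mult. nra. Qed.

Lemma rho_upper h n : 1/2 < h < 3/4 ->
  rho h (S (S n)) <= h*(2*h-1) * Rpower (INR n + 1) (2*h-2).
Proof. intros Hh. unfold rho. rewrite !S_INR.
  assert (H0 := pos_INR n).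
  rewrite !rpow_pos by lra.
  assert (H := sd_upper (2*h) (INR n + 1 + 1) ltac:(lra) ltac:(lra)).
  replace (INR n + 1 + 1 - 1) with (INR n + 1) in * by ring. nra. Qed.

Definition b s (n : nat) := / rpow (INR n + 1) s.

Lemma tele s (x : R) : 1 < s -> 0 < x -> exists c, x < c < x + 1 /\
  Rpower x (1-s) - Rpower (x+1) (1-s) = (s-1) * Rpower c (-s).
Proof. intros Hs Hx. destruct (pow_mvt (1-s) x (x+1)) as [c [Hc E]]. lra.
  exists c; split; auto. replace (1-s-1) with (-s) in E by ring. lra. Qed.

Lemma b_eq s n : b s n = Rpower (INR n + 1) (-s).
Proof. unfold b. rewrite rpow_pos by (assert (H:=pos_INR n); lra). rewrite Rpower_Ropp; auto. Qed.

Lemma b_pos s n : 0 < b s n.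
Proof. rewrite b_eq; apply Rpower_gt0. Qed.

Lemma sum_upper s N : 1 < s -> sum_n (b s) N <= 1 + (1 - Rpower (INR N + 1) (1-s))/(s-1).
Proof. intros Hs. induction N.
  - rewrite sum_O, b_eq. simpl INR. replace (0+1) with 1 by ring. rewrite !Rpower_1_base.
    unfold Rdiv; lra.
  - rewrite sum_Sn, b_eq, !S_INR. unfold plus; simpl.
    assert (H0 := pos_INR N).
    destruct (tele s (INR N + 1) Hs ltac:(lra)) as [c [Hc E]].
    assert (Rpower (INR N + 1 + 1) (-s) <= Rpower c (-s)) by (apply Rpower_le_neg; lra).
    assert (Hi : (1 - Rpower (INR N + 1) (1 - s)) / (s - 1) + Rpower c (-s)
      = (1 - Rpower (INR N + 1 + 1) (1 - s)) / (s - 1)).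
    { apply Rmult_eq_reg_r with (s-1); [|lra]. unfold Rdiv.
      rewrite Rmult_plus_distr_r, !Rmult_assoc, Rinv_l by lra. lra. }
    lra. Qed.

Lemma sum_lower s N : 1 < s -> (1 - Rpower (INR N + 2) (1-s))/(s-1) <= sum_n (b s) N.
Proof. intros Hs. induction N.
  - rewrite sum_O, b_eq. simpl INR. replace (0+1) with 1 by ring.
    destruct (tele s 1 Hs ltac:(lra)) as [c [Hc E]].
    replace (0+2) with (1+1) by ring. rewrite Rpower_1_base in *.
    assert (Rpower c (-s) <= Rpower 1 (-s)) by (apply Rpower_le_neg; lra).
    rewrite Rpower_1_base in *.
    rewrite E. unfold Rdiv. rewrite Rmult_comm, <- Rmult_assoc, Rinv_l by lra. lra.
  - rewrite sum_Sn, b_eq, !S_INR. unfold plus; simpl.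
    assert (H0 := pos_INR N).
    destruct (tele s (INR N + 2) Hs ltac:(lra)) as [c [Hc E]].
    assert (Rpower c (-s) <= Rpower (INR N + 1 + 1) (-s)) by (apply Rpower_le_neg; lra).
    replace (INR N + 1 + 2) with (INR N + 2 + 1) by ring.
    assert (Hi : (1 - Rpower (INR N + 2) (1 - s)) / (s - 1) + Rpower c (-s)
      = (1 - Rpower (INR N + 2 + 1) (1 - s)) / (s - 1)).
    { apply Rmult_eq_reg_r with (s-1); [|lra]. unfold Rdiv.
      rewrite Rmult_plus_distr_r, !Rmult_assoc, Rinv_l by lra. lra. }
    lra. Qed.

Lemma ex_series_pos_bounded (a : nat -> R) M : (forall n, 0 <= a n) ->
  (forall N, sum_n a N <= M) -> ex_series a.
Proof. intros Hp Hb. destruct (ex_finite_lim_seq_incr (sum_n a) M) as [l Hl].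
  intros n; rewrite sum_Sn; unfold plus; simpl; specialize (Hp (S n)); lra. auto.
  exists l; exact Hl. Qed.

Lemma partial_le_Series (a : nat -> R) N : ex_series a -> (forall n, 0 <= a n) ->
  sum_n a N <= Series a.
Proof. intros [l Hl] Hp. rewrite (is_series_unique a l Hl).
  apply (is_lim_seq_incr_compare (sum_n a) l). exact Hl.
  intros n; rewrite sum_Sn; unfold plus; simpl; specialize (Hp (S n)); lra. Qed.

Lemma ex_b s : 1 < s -> ex_series (b s).
Proof. intros Hs. apply ex_series_pos_bounded with (1 + 1/(s-1)).
  intros n; left; apply b_pos.
  intros N. eapply Rle_trans. apply sum_upper; auto.
  assert (H := Rpower_gt0 (INR N + 1) (1-s)).
  unfold Rdiv. assert (0 < /(s-1)) by (apply Rinv_0_lt_compat; lra). nra. Qed.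

Lemma zeta_lower s : 1 < s -> / (2 * (s-1)) <= zeta s.
Proof. intros Hs. unfold zeta. fold (b s).
  set (T := exp (ln 2 / (s-1))).
  assert (HT : 0 < T) by apply exp_pos.
  destruct (archimed T) as [HT1 _].
  assert (Hu : (0 < up T)%Z) by (apply lt_0_IZR; lra).
  set (N := Z.to_nat (up T)).
  assert (HN : INR N = IZR (up T)).
  { unfold N. rewrite INR_IZR_INZ, Z2Nat.id; auto; lia. }
  apply Rle_trans with ((1 - Rpower (INR N + 2) (1-s))/(s-1)).
  2: { eapply Rle_trans. apply sum_lower; auto. apply partial_le_Series. apply ex_b; auto.
       intros; left; apply b_pos. }
  assert (Rpower (INR N + 2) (1-s) <= / 2).
  { unfold Rpower. replace (/2) with (exp (- ln 2)) by (rewrite exp_Ropp, exp_ln; lra). apply exp_le'.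
    assert (ln T <= ln (INR N + 2)) by (apply ln_le; lra).
    unfold T in H. rewrite ln_exp in H.
    assert (ln 2 <= (s-1) * ln (INR N + 2)).
    { replace (ln 2) with ((s-1) * (ln 2 / (s-1))) by (field; lra).
      apply Rmult_le_compat_l; lra. }
    nra. }
  unfold Rdiv. rewrite Rinv_mult.
  apply Rmult_le_compat_r; [left; apply Rinv_0_lt_compat; lra | lra]. Qed.

Lemma part1_pos h k : 1/2 < h < 3/4 -> (1 <= k)%nat ->
  0 < h * (2 * h - 1) / (2 * rpow (INR k) (2 - 2 * h)).
Proof. intros Hh Hk. assert (1 <= INR k) by (replace 1 with (INR 1) by reflexivity; apply le_INR; auto).
  rewrite rpow_pos by lra. assert (H0 := Rpower_gt0 (INR k) (2-2*h)).
  apply Rdiv_lt_0_compat; nra. Qed.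

Lemma part2 h : 1/2 < h < 3/4 ->
     ex_series (fun n : nat => (rho h (S n)) ^ 2) /\
     Series (fun n : nat => (rho h (S n)) ^ 2)
       >= h ^ 2 * (2 * h - 1) ^ 2 / 4 * zeta (4 - 4 * h).
Proof. intros Hh.
  assert (Hs : 1 < 4 - 4*h) by lra.
  assert (Hex : ex_series (fun n : nat => (rho h (S n)) ^ 2)).
  { apply ex_series_incr_1.
    apply (ex_series_le (K:=R_AbsRing) (V:=R_CompleteNormedModule)) with (fun n => (h*(2*h-1))^2 * b (4-4*h) n).
    - intros n. unfold norm; simpl; unfold abs; simpl.
      assert (L := part1 h (S (S n)) Hh ltac:(lia)).
      assert (L0 := part1_pos h (S (S n)) Hh ltac:(lia)).
      assert (U := rho_upper h n Hh).
      rewrite Rabs_pos_eq by nra.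
      rewrite b_eq. replace (-(4-4*h)) with ((2*h-2)+(2*h-2)) by ring.
      rewrite Rpower_plus.
      assert (0 <= rho h (S (S n))) by lra.
      set (P := Rpower (INR n + 1) (2*h-2)) in *. set (r := rho h (S (S n))) in *.
      assert (0 <= h*(2*h-1)*P) by lra. nra.
    - exact (ex_series_scal_l ((h*(2*h-1))^2) (b (4-4*h)) (ex_b _ Hs)). }
  split; auto.
  unfold zeta. fold (b (4-4*h)). rewrite <- Series_scal_l.
  apply Rle_ge, Series_le; auto.
  intros n. assert (Hb := b_pos (4-4*h) n).
  split. apply Rmult_le_pos; [|lra]. apply Rmult_le_pos; [|lra]. apply Rmult_le_pos; apply pow2_ge_0.
  assert (L := part1 h (S n) Hh ltac:(lia)).
  assert (L0 := part1_pos h (S n) Hh ltac:(lia)).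
  rewrite S_INR in *. assert (H0 := pos_INR n).
  rewrite rpow_pos in * by lra.
  rewrite b_eq. replace (-(4-4*h)) with (-(2-2*h) + -(2-2*h)) by ring.
  rewrite Rpower_plus, Rpower_Ropp.
  set (X := Rpower (INR n + 1) (2 - 2 * h)) in *.
  assert (0 < X) by apply Rpower_gt0.
  replace (h ^ 2 * (2 * h - 1) ^ 2 / 4 * (/ X * / X)) with ((h * (2 * h - 1) / (2 * X))^2)
    by (field; lra).
  apply pow_incr; lra. Qed.

Lemma part3 : filterlim (fun h : R => Series (fun n : nat => (rho h (S n)) ^ 2))
            (at_left (3/4)) (Rbar_locally p_infty).
Proof. intros P [M HM]. unfold filtermap, at_left, within, locally.
  assert (He : 0 < Rmin (1/12) (/(648*(Rabs M+1)))).
  { apply Rmin_pos. lra. apply Rinv_0_lt_compat. assert (H := Rabs_pos M). lra. }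
  exists (mkposreal _ He). intros y Hy Hlt. apply HM. simpl in Hy.
  unfold ball in Hy; simpl in Hy; unfold AbsRing_ball, abs, minus, plus, opp in Hy; simpl in Hy.
  assert (Hy2 : 3/4 - y < Rmin (1/12) (/(648*(Rabs M+1)))).
  { assert (H := Rabs_Ropp (y + - (3/4))). assert (H2 := Rle_abs (-(y + - (3/4)))). lra. }
  assert (Hm1 := Rmin_l (1/12) (/(648*(Rabs M+1)))).
  assert (Hm2 := Rmin_r (1/12) (/(648*(Rabs M+1)))).
  assert (Hh : 1/2 < y < 3/4) by lra.
  destruct (part2 y Hh) as [_ Hs].
  assert (Hz := zeta_lower (4-4*y) ltac:(lra)).
  set (d := 4 - 4*y - 1) in *.
  assert (Hd : 0 < d) by (unfold d; lra).
  set (Z := / (2*d)) in *.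
  assert (HZ : Z * (2*d) = 1) by (unfold Z; field; lra).
  assert (Hc : 1/81 <= y ^ 2 * (2 * y - 1) ^ 2 / 4).
  { assert (4/9 <= y^2) by nra. assert (1/9 <= (2*y-1)^2) by nra. nra. }
  assert (HMa : M <= Rabs M) by apply Rle_abs.
  assert (HA : 0 <= Rabs M) by apply Rabs_pos.
  assert (Hd2 : 648*(Rabs M+1) * (3/4 - y) < 1).
  { assert (648*(Rabs M+1) * (3/4 - y) < 648*(Rabs M+1) * /(648*(Rabs M+1))).
    { apply Rmult_lt_compat_l; lra. }
    rewrite Rinv_r in H; lra. }
  assert (Hd3 : 81 * (Rabs M + 1) < Z).
  { assert (d = 4 * (3/4 - y)) by (unfold d; lra). nra. }
  assert (0 <= Z) by lra.
  nra. Qed.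

Theorem lemmaA4 :
  (forall h : R, 1/2 < h < 3/4 ->
     forall k : nat, (1 <= k)%nat ->
       rho h k >= h * (2 * h - 1) / (2 * rpow (INR k) (2 - 2 * h)))
  /\
  (forall h : R, 1/2 < h < 3/4 ->
     ex_series (fun n : nat => (rho h (S n)) ^ 2) /\
     Series (fun n : nat => (rho h (S n)) ^ 2)
       >= h ^ 2 * (2 * h - 1) ^ 2 / 4 * zeta (4 - 4 * h))
  /\
  filterlim (fun h : R => Series (fun n : nat => (rho h (S n)) ^ 2))
            (at_left (3/4)) (Rbar_locally p_infty).
Proof. split; [intros h Hh k Hk; exact (part1 h k Hh Hk) | split; [exact part2 | exact part3]]. Qed.
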